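(* Let $G$ be a finite group and let $(\Phi,\Psi)$ be a complementary pair of Young functions both satisfying the $\Delta_2$-condition. Then the Banach algebra $A_\Phi(G)^{**}$, equipped with the first Arens product, is semi-simple.
   Context: A Young function is an even, convex, continuous, real-valued function $\Phi:\mathbb{R}\to[0,\infty)$ with $\Phi(0)=0$ and $\lim_{x\to\infty}\Phi(x)=\infty$; its complementary function is $\Psi(y)=\sup\{x|y|-\Phi(x):x\ge0\}$. $\Phi$ satisfies the $\Delta_2$-condition if there is $k>0$ with $\Phi(2x)\le k\Phi(x)$ for all $x\ge0$. $A_\Phi(G)$ is the space of functions $u=\sum_n f_n*\check{g_n}$ ($f_n\in L^\Phi(G)$ with Luxemburg norm $N_\Phi$, $g_n\in L^\Psi(G)$ with Orlicz norm $\|\cdot\|_\Psi$, $\check g(x)=g(x^{-1})$, $\sum_n N_\Phi(f_n)\|g_n\|_\Psi<\infty$) with the infimum norm; a commutative Banach algebra under pointwise operations. First Arens product on $A_\Phi(G)^{**}$: $\langle u\cdot T,v\rangle=\langle T,uv\rangle$, $\langle\Gamma\odot T,u\rangle=\langle\Gamma,u\cdot T\rangle$, $\langle\tilde\Gamma\,\square\,\Gamma,T\rangle=\langle\tilde\Gamma,\Gamma\odot T\rangle$ for $u,v\in A_\Phi(G)$, $T\in A_\Phi(G)^*$, $\Gamma,\tilde\Gamma\in A_\Phi(G)^{**}$. Semi-simple means the Jacobson radical is $\{0\}$. *)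

(* Defs.v *)
From HB Require Import structures.
From mathcomp Require Import all_boot all_order all_algebra all_fingroup.
From mathcomp Require Import all_classical all_reals all_analysis.
From mathcomp Require Import complex.
Set Implicit Arguments. Unset Strict Implicit. Unset Printing Implicit Defensive.
Import Order.TTheory GRing.Theory Num.Theory.
Import numFieldNormedType.Exports.
Local Open Scope ring_scope.
Local Open Scope classical_set_scope.

Section Radical.
Variables (K : pzRingType) (X : Type) (P : X -> Prop)
  (add : X -> X -> X) (scale : K -> X -> X) (mul : X -> X -> X) (zero : X).

Record left_ideal (I : X -> Prop) : Prop := {
  li_sub : forall x, I x -> P x;
  li_0 : I zero;
  li_add : forall x y, I x -> I y -> I (add x y);
  li_scale : forall c x, I x -> I (scale c x);
  li_mul : forall a x, P a -> I x -> I (mul a x) }.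

Definition modular_left (I : X -> Prop) : Prop :=
  exists e, P e /\ forall a, P a -> I (add a (scale (-1) (mul a e))).

Definition proper_set (I : X -> Prop) : Prop := exists a, P a /\ ~ I a.

Definition maximal_modular_left_ideal (I : X -> Prop) : Prop :=
  [/\ left_ideal I, modular_left I, proper_set I &
      forall J, left_ideal J -> proper_set J -> (forall x, I x -> J x) ->
        forall x, J x -> I x].

Definition jacobson_radical (x : X) : Prop :=
  P x /\ forall I, maximal_modular_left_ideal I -> I x.

Definition semisimple : Prop := forall x, jacobson_radical x -> x = zero.
End Radical.

Section Young.
Variable R : realType.

Record young_function (Phi : R -> R) : Prop := {
  young_even : forall x : R, Phi (- x) = Phi x;
  young_convex : forall x y t : R, 0 <= t <= 1 ->
      Phi (t * x + (1 - t) * y) <= t * Phi x + (1 - t) * Phi y;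
  young_cont : continuous Phi;
  young_ge0 : forall x : R, 0 <= Phi x;
  young_0 : Phi 0 = 0;
  young_infty : Phi x @[x --> +oo%R] --> +oo%R }.

Definition complementary (Phi Psi : R -> R) : Prop :=
  forall y,
    (forall x, 0 <= x -> x * `|y| - Phi x <= Psi y) /\
    (forall z, (forall x, 0 <= x -> x * `|y| - Phi x <= z) -> Psi y <= z).

Definition delta2 (Phi : R -> R) : Prop :=
  exists k, 0 < k /\ forall x, 0 <= x -> Phi (2 * x) <= k * Phi x.
End Young.

(* The Orlicz Fourier-type algebra A_Phi(G) of a finite group G        *)
(* (Haar measure = counting measure) and its bidual with the first     *)
(* Arens product.                                                      *)
Section APhi.
Variables (R : realType) (gT : finGroupType) (Phi Psi : R -> R).
Local Notation C := R[i].
Local Notation F := (gT -> C).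

Definition cabs (z : C) : R := ComplexField.Normc.normc z.

Definition luxemburg (f : F) : R :=
  inf [set k : R | 0 < k /\ \sum_(x : gT) Phi (cabs (f x) / k) <= 1].

Definition orlicz (g : F) : R :=
  sup [set s : R | exists v : F,
         \sum_(x : gT) Phi (cabs (v x)) <= 1 /\
         s = \sum_(x : gT) cabs (v x * g x)].

Definition check (g : F) : F := fun x => g (x^-1)%g.

Definition conv (f h : F) : F := fun x => \sum_(y : gT) f y * h (y^-1 * x)%g.

Definition cvgC (s : nat -> C) (l : C) : Prop :=
  forall eps : R, 0 < eps -> exists N0, forall N, (N0 <= N)%N ->
    cabs (s N - l) < eps.

Definition AP_rep (u : F) (s : R) : Prop :=
  exists (f g : nat -> F),
    series (fun n => luxemburg (f n) * orlicz (g n)) @ \oo --> s /\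
    forall x, cvgC (fun N => \sum_(n < N) conv (f n) (check (g n)) x) (u x).

Definition inAP (u : F) : Prop := exists s, AP_rep u s.

Definition normAP (u : F) : R := inf [set s | AP_rep u s].

Definition isDual (T : F -> C) : Prop :=
  [/\ forall u v, inAP u -> inAP v -> T (fun x => u x + v x) = T u + T v,
      forall (c : C) u, inAP u -> T (fun x => c * u x) = c * T u,
      exists M : R, forall u, inAP u -> cabs (T u) <= M * normAP u &
      forall u, ~ inAP u -> T u = 0].

Definition normDual (T : F -> C) : R :=
  sup [set cabs (T u) | u in [set u | inAP u /\ normAP u <= 1]].

Definition isBidual (Ga : (F -> C) -> C) : Prop :=
  [/\ forall T T', isDual T -> isDual T' ->
        Ga (fun u => T u + T' u) = Ga T + Ga T',
      forall (c : C) T, isDual T -> Ga (fun u => c * T u) = c * Ga T,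
      exists M : R, forall T, isDual T -> cabs (Ga T) <= M * normDual T &
      forall T, ~ isDual T -> Ga T = 0].

Definition dot (u : F) (T : F -> C) : F -> C :=
  fun v => if `[< inAP v >] then T (fun x => u x * v x) else 0.

Definition odot (Ga : (F -> C) -> C) (T : F -> C) : F -> C :=
  fun u => if `[< inAP u >] then Ga (dot u T) else 0.

Definition arens (Gt Ga : (F -> C) -> C) : (F -> C) -> C :=
  fun T => if `[< isDual T >] then Gt (odot Ga T) else 0.

Definition biadd (G1 G2 : (F -> C) -> C) : (F -> C) -> C :=
  fun T => G1 T + G2 T.
Definition biscale (c : C) (G1 : (F -> C) -> C) : (F -> C) -> C :=
  fun T => c * G1 T.
Definition bizero : (F -> C) -> C := fun _ => 0.

Definition bidual_arens_semisimple : Prop :=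
  semisimple isBidual biadd biscale arens bizero.
End APhi.

(* Main.v *)
Require Import Defs.
From mathcomp Require Import all_boot all_order all_algebra all_fingroup.
From mathcomp Require Import all_classical all_reals all_analysis.
From mathcomp Require Import complex.
From HB Require Import structures.
From mathcomp Require Import ring lra.
Unset Strict Implicit. Unset Printing Implicit Defensive.
Import Order.TTheory GRing.Theory Num.Theory.
Import numFieldNormedType.Exports.
Local Open Scope ring_scope.
Local Open Scope classical_set_scope.

Set Implicit Arguments.

Section PhiLemmas.
Variables (R : realType) (Phi : R -> R) (yP : young_function Phi).

Lemma phi_scale (x y : R) : 0 <= x <= y -> 0 < y -> Phi x <= x / y * Phi y.
Proof.
move=> /andP[x0 xy] y0.
have t01 : 0 <= x / y <= 1.
  apply/andP; split; [by rewrite divr_ge0 // ltW | by rewrite ler_pdivrMr // mul1r].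
have := young_convex yP y 0 t01.
by rewrite mulr0 addr0 young_0 // mulr0 addr0 divfK ?gt_eqF.
Qed.

Lemma phi_small : exists a, 0 < a /\ Phi a <= 1.
Proof.
have p1 := young_ge0 yP 1.
exists (1 / (Phi 1 + 1)); split; first by rewrite divr_gt0 // ltr_pwDr.
have h1 : 1 / (Phi 1 + 1) <= 1 by rewrite ler_pdivrMr ?mul1r ?lerDr // ltr_pwDr.
apply: (le_trans (phi_scale _ ltr01)).
  by rewrite h1 divr_ge0 // addr_ge0.
rewrite divr1 mul1r mulrC ler_pdivrMr ?ltr_pwDr // mul1r lerDl //.
Qed.

Lemma phi_big : exists B, 0 < B /\ forall x, B <= x -> 1 < Phi x.
Proof.
have := young_infty yP; move/cvgryPgt => /(_ 1) [M [Mr HM]].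
pose B := Num.max 1 (M + 1).
have B0 : 0 < B by rewrite lt_max ltr01.
have HB : 1 < Phi B by apply: HM; rewrite lt_max orbC ltrDl ltr01.
exists B; split => // x Bx.
apply: HM; apply: lt_le_trans Bx; rewrite lt_max orbC ltrDl ltr01 //.
Qed.
End PhiLemmas.

Unset Implicit Arguments.

Section Cabs.
Variable R : realType.
Local Notation C := R[i].
Lemma cabs_ge0 (z : C) : 0 <= cabs z.
Proof. by case: z => a b; rewrite /cabs /= sqrtr_ge0. Qed.
Lemma cabsM (z w : C) : cabs (z * w) = cabs z * cabs w.
Proof. exact: ComplexField.Normc.normcM. Qed.
Lemma cabs0 : cabs (0 : C) = 0.
Proof. exact: ComplexField.Normc.normc0. Qed.
Lemma cabsD (z w : C) : cabs (z + w) <= cabs z + cabs w.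
Proof. exact: le_normcD. Qed.
Lemma cabsN (z : C) : cabs (- z) = cabs z.
Proof. exact: normcN. Qed.
Lemma cabs_real (a : R) : 0 <= a -> cabs (a%:C%C) = a.
Proof.
move=> a0; rewrite /cabs /= expr0n /= addr0 sqrtr_sqr ger0_norm //.
Qed.
Lemma cabs_sum (I : Type) (r : seq I) (P : pred I) (F : I -> C) :
  cabs (\sum_(i <- r | P i) F i) <= \sum_(i <- r | P i) cabs (F i).
Proof.
elim: r => [|x r IH]; first by rewrite !big_nil cabs0.
rewrite !big_cons; case: (P x) => //.
by apply: le_trans (cabsD _ _) _; rewrite lerD2l.
Qed.
End Cabs.

Lemma shuffle1 (K : fieldType) (B l o a : K) : B * l * (o / a) = B / a * (l * o).
Proof. ring. Qed.

Section Analysis.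
Variables (R : realType) (gT : finGroupType) (Phi : R -> R).
Hypothesis yP : young_function Phi.
Local Notation C := R[i].
Local Notation F := (gT -> C).

Variables (a B : R).
Hypotheses (a0 : 0 < a) (Pa : Phi a <= 1) (B0 : 0 < B)
  (PB : forall x, B <= x -> 1 < Phi x).

Lemma phi_lt_B (x : R) : Phi x <= 1 -> x < B.
Proof. by move=> h; rewrite ltNge; apply/negP => /PB; rewrite ltNge h. Qed.

Lemma lux_mem_eps (f : F) (e : R) : 0 < e ->
  let k := ((\sum_x cabs (f x)) + e) / a in
  0 < k /\ \sum_(x : gT) Phi (cabs (f x) / k) <= 1.
Proof.
move=> e0 k.
have m0 : 0 <= \sum_x cabs (f x) by apply: sumr_ge0 => x _; exact: cabs_ge0.
have me0 : 0 < (\sum_x cabs (f x)) + e by rewrite ltr_wpDl.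
have k0 : 0 < k by rewrite divr_gt0.
split => //.
apply: (@le_trans _ _ ((\sum_x cabs (f x)) / ((\sum_x cabs (f x)) + e))); last first.
  by rewrite ler_pdivrMr // mul1r lerDl ltW.
rewrite mulr_suml; apply: ler_sum => x _.
have cx : cabs (f x) <= \sum_y cabs (f y).
  rewrite (bigD1 x) //= lerDl; apply: sumr_ge0 => y _; exact: cabs_ge0.
have h1 : 0 <= cabs (f x) / k <= a.
  rewrite divr_ge0 ?cabs_ge0 ?(ltW k0) //=.
  rewrite ler_pdivrMr // /k mulrCA divff ?gt_eqF //.
  rewrite mulr1; apply: le_trans cx _; rewrite lerDl ltW //.
apply: le_trans (phi_scale yP h1 a0) _.
rewrite /k invf_div.
have -> : cabs (f x) * (a / ((\sum_x0 cabs (f x0)) + e)) / a =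
   cabs (f x) / ((\sum_x0 cabs (f x0)) + e).
  by field; rewrite !gt_eqF.
rewrite -[leRHS]mulr1 ler_wpM2l //.
by rewrite divr_ge0 ?cabs_ge0 // ltW.
Qed.

Definition luxset (f : F) := [set k : R | 0 < k /\ \sum_(x : gT) Phi (cabs (f x) / k) <= 1].

Lemma lux_lb0 (f : F) : lbound (luxset f) 0.
Proof. by move=> k [k0 _]; exact: ltW. Qed.

Lemma lux_ne (f : F) : luxset f !=set0.
Proof. by have [k0 h] := lux_mem_eps f 1 ltr01; eexists; split; [exact: k0 | exact: h]. Qed.

Lemma lux_ge0 (f : F) : 0 <= luxemburg Phi f.
Proof. exact: (lb_le_inf (lux_ne f) (lux_lb0 f)). Qed.

Lemma lux_le (f : F) (k : R) : 0 < k -> \sum_(x : gT) Phi (cabs (f x) / k) <= 1 ->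
  luxemburg Phi f <= k.
Proof. by move=> k0 h; apply: (ge_inf (ex_intro _ 0 (lux_lb0 f))); split. Qed.

Lemma lux_ub (f : F) (y : gT) : cabs (f y) <= B * luxemburg Phi f.
Proof.
rewrite mulrC -ler_pdivrMr //; apply: lb_le_inf (lux_ne f) _ => k [k0 hk].
rewrite ler_pdivrMr // mulrC -ler_pdivrMr //; apply: ltW; apply: phi_lt_B.
apply: le_trans hk; rewrite (bigD1 y) //= lerDl; apply: sumr_ge0 => x _.
exact: young_ge0.
Qed.

Definition orlset (g : F) := [set s : R | exists v : F,
         \sum_(x : gT) Phi (cabs (v x)) <= 1 /\
         s = \sum_(x : gT) cabs (v x * g x)].

Lemma orl_has_ub (g : F) : has_ubound (orlset g).
Proof.
exists (\sum_x B * cabs (g x)) => s [v [hv ->]].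
apply: ler_sum => x _; rewrite cabsM ler_wpM2r ?cabs_ge0 //; apply: ltW.
apply: phi_lt_B; apply: le_trans hv; rewrite (bigD1 x) //= lerDl.
by apply: sumr_ge0 => y _; exact: young_ge0.
Qed.

Lemma orl_lb (g : F) (z : gT) : a * cabs (g z) <= orlicz Phi g.
Proof.
apply: (ub_le_sup (orl_has_ub g)).
exists (fun x => if x == z then (a%:C)%C else 0); split.
  rewrite (bigD1 z) //= eqxx cabs_real ?(ltW a0) // big1 ?addr0 // => x /negbTE ->.
  by rewrite cabs0 young_0.
rewrite (bigD1 z) //= eqxx cabsM cabs_real ?(ltW a0) // big1 ?addr0 // => x /negbTE ->.
by rewrite mul0r cabs0.
Qed.

Lemma orl_ge0 (g : F) : 0 <= orlicz Phi g.
Proof. apply: le_trans (orl_lb g 1%g); rewrite mulr_ge0 ?cabs_ge0 ?(ltW a0) //. Qed.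

Lemma orl_ub (g : F) (z : gT) : cabs (g z) <= orlicz Phi g / a.
Proof. by rewrite ler_pdivlMr // mulrC orl_lb. Qed.

Lemma orl0 : orlicz Phi (fun _ : gT => 0 : C) = 0.
Proof.
apply/eqP; rewrite eq_le orl_ge0 andbT; apply: ge_sup.
  exists 0, (fun _ => 0); split; last by rewrite big1 // => x _; rewrite mul0r cabs0.
  by rewrite big1 // => x _; rewrite cabs0 young_0.
by move=> s [v [_ ->]]; rewrite big1 // => x _; rewrite mulr0 cabs0.
Qed.

Definition Mc : R := \sum_(y : gT) B / a.

Lemma Mc_gt0 : 0 < Mc.
Proof.
have ba : 0 < B / a by rewrite divr_gt0.
rewrite /Mc (bigD1 1%g) //= ltr_wpDr //; apply: sumr_ge0 => y _; exact: ltW.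
Qed.

Lemma conv_bound (f h : F) (x : gT) :
  cabs (Defs.conv f (Defs.check h) x) <= Mc * (luxemburg Phi f * orlicz Phi h).
Proof.
rewrite /Defs.conv; apply: (le_trans (cabs_sum _ _ _ _ _)).
apply: (@le_trans _ _ (\sum_(y : gT) (B * luxemburg Phi f) * (orlicz Phi h / a))).
  apply: ler_sum => y _; rewrite cabsM; apply: ler_pM; rewrite ?cabs_ge0 //.
    exact: lux_ub.
  exact: (orl_ub h _).
rewrite /Mc mulr_suml; apply: ler_sum => y _; rewrite shuffle1 //.
Qed.

Local Notation tm f h := (fun n => luxemburg Phi (f n) * orlicz Phi (h n)).

Lemma series_nd (f h : nat -> F) : nondecreasing_seq (series (tm f h)).
Proof.
apply: (@nondecreasing_series _ _ xpredT 0%N) => n _ _.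
by rewrite mulr_ge0 ?lux_ge0 ?orl_ge0.
Qed.

Lemma part_le (f h : nat -> F) (s : R) : series (tm f h) @ \oo --> s ->
  forall N, series (tm f h) N <= s.
Proof.
move=> Hs N; have := nondecreasing_cvgn_le (series_nd f h) (cvgP _ Hs) N.
by rewrite (cvg_lim _ Hs).
Qed.

Lemma rep_ge0 (u : F) (s : R) : AP_rep Phi u s -> 0 <= s.
Proof.
move=> [f [h [Hs _]]]; have := part_le _ _ _ Hs 0%N.
by rewrite /series /= big_geq.
Qed.

Lemma rep_bound (u : F) (s : R) (x : gT) : AP_rep Phi u s -> cabs (u x) <= Mc * s.
Proof.
move=> [f [h [Hs Hc]]].
have HP N : cabs (\sum_(n < N) Defs.conv (f n) (Defs.check (h n)) x) <= Mc * s.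
  apply: (le_trans (cabs_sum _ _ _ _ _)).
  apply: (@le_trans _ _ (\sum_(n < N) Mc * (luxemburg Phi (f n) * orlicz Phi (h n)))).
    by apply: ler_sum => n _; exact: conv_bound.
  rewrite -mulr_sumr ler_wpM2l ?(ltW Mc_gt0) //.
  by have := part_le _ _ _ Hs N; rewrite /series /= big_mkord.
rewrite leNgt; apply/negP => hlt.
have e0 : 0 < cabs (u x) - Mc * s by rewrite subr_gt0.
have [N0 HN] := Hc x _ e0.
have := HN N0 (leqnn _); set P := \sum_(n < N0) _ => hd.
have := cabsD _ P (u x - P); rewrite addrCA subrr addr0 -opprB cabsN => ht.
have := HP N0; rewrite -/P => hp.
lra.
Qed.

Lemma normAP_lb (u : F) (x : gT) : inAP Phi u -> cabs (u x) <= Mc * normAP Phi u.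
Proof.
move=> [s0 hs0]; rewrite mulrC -ler_pdivrMr ?Mc_gt0 //.
apply: lb_le_inf; first by exists s0.
move=> s hs; rewrite ler_pdivrMr ?Mc_gt0 // mulrC; exact: rep_bound.
Qed.

Lemma normAP_le (u : F) (s : R) : AP_rep Phi u s -> normAP Phi u <= s.
Proof.
move=> hs; apply: ge_inf => //; exists 0 => t ht; exact: rep_ge0 _ _ ht.
Qed.

Lemma rep_single (f h : F) :
  AP_rep Phi (Defs.conv f (Defs.check h)) (luxemburg Phi f * orlicz Phi h).
Proof.
exists (fun n => if n is 0%N then f else fun _ => 0).
exists (fun n => if n is 0%N then h else fun _ => 0).
split.
  apply: cvg_near_cst. exists 1%N => // -[|N] //= _.
  rewrite /series /= big_nat_recl //= big1 ?addr0 // => i _.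
  by rewrite orl0 mulr0.
move=> x e e0; exists 1%N => -[|N] // _.
rewrite big_ord_recl /= big1 ?addr0 ?subrr ?cabs0 // => i _.
by rewrite /Defs.conv big1 // => y _; rewrite mul0r.
Qed.


Definition del1 : F := fun x => if x == 1%g then 1 else 0.

Lemma conv_del1 (u : F) : Defs.conv u (Defs.check del1) = u.
Proof.
apply: funext => x; rewrite /Defs.conv /Defs.check /del1 (bigD1 x) //=.
rewrite mulVg invg1 eqxx mulr1 big1 ?addr0 // => y hy.
by rewrite invg_eq1 -eq_mulVg1 (negbTE hy) mulr0.
Qed.

Lemma inAP_all (u : F) : inAP Phi u.
Proof. by exists (luxemburg Phi u * orlicz Phi del1); rewrite -{1}(conv_del1 u); exact: rep_single. Qed.

Lemma normAP_ge0 (u : F) : 0 <= normAP Phi u.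
Proof.
have [s hs] := inAP_all u.
apply: lb_le_inf; first by exists s.
by move=> t ht; exact: rep_ge0 _ _ ht.
Qed.

Definition tw (w : F) : R :=
  1 / ((\sum_x cabs (w x) + 1) / a * (orlicz Phi del1 + 1)).

Lemma tw_gt0 w : 0 < tw w.
Proof.
have m0 : 0 <= \sum_x cabs (w x) by apply: sumr_ge0 => x _; exact: cabs_ge0.
rewrite /tw divr_gt0 // mulr_gt0 //; first by rewrite divr_gt0 // ltr_wpDl.
by rewrite ltr_wpDl // orl_ge0.
Qed.

Lemma tw_norm (w : F) : normAP Phi (fun x => (tw w)%:C%C * w x) <= 1.
Proof.
set t := tw w; set u := fun x => _.
have t0 : 0 < t := tw_gt0 w.
have m0 : 0 <= \sum_x cabs (w x) by apply: sumr_ge0 => x _; exact: cabs_ge0.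
have o0 := orl_ge0 del1.
apply: (le_trans (normAP_le _ _ _)); first by rewrite -(conv_del1 u); exact: rep_single.
have [k0 hk] := lux_mem_eps u _ t0.
have hl := lux_le _ _ k0 hk.
have hs : \sum_x cabs (u x) = t * \sum_x cabs (w x).
  by rewrite mulr_sumr; apply: eq_bigr => x _; rewrite /u cabsM cabs_real // ltW.
rewrite hs in hl.
apply: (le_trans (ler_wpM2r o0 hl)).
have -> : (t * (\sum_x cabs (w x)) + t) / a * orlicz Phi del1 =
  t * ((\sum_x cabs (w x) + 1) / a * orlicz Phi del1) by field; rewrite gt_eqF.
rewrite /t /tw mul1r ler_pdivrMl ?mulr1; last first.
  by rewrite mulr_gt0 // ?divr_gt0 // ?ltr_wpDl // ltr_wpDl.
rewrite ler_wpM2l ?lerDl //.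
apply: divr_ge0; last exact: ltW.
first [ by rewrite addr_ge0 | by apply: sumr_ge0 => x _; rewrite addr_ge0 ?cabs_ge0 ].
Qed.

End Analysis.

Section Alg.
Variables (R : realType) (gT : finGroupType) (Phi : R -> R).
Local Notation C := R[i].
Local Notation F := (gT -> C).
Local Notation D := ((gT -> C) -> C).
Local Notation BD := (((gT -> C) -> C) -> C).
Hypothesis H1 : forall u : F, inAP Phi u.
Variable Mc : R.
Hypothesis H2 : forall (u : F) x, cabs (u x) <= Mc * normAP Phi u.
Hypothesis H3 : forall u : F, 0 <= normAP Phi u.
Variable tw : F -> R.
Hypothesis H4 : forall w, 0 < tw w.
Hypothesis H5 : forall w, normAP Phi (fun x => (tw w)%:C%C * w x) <= 1.

Definition ev (g : gT) : D := fun u => u g.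
Definition del (g : gT) : F := fun x => if x == g then 1 else 0.

Definition linD (T : D) := (forall u v : F, T (fun x => u x + v x) = T u + T v) /\
  (forall (c : C) (u : F), T (fun x => c * u x) = c * T u).

Lemma lin0 T : linD T -> T (fun _ => 0) = 0.
Proof.
move=> [_ hs]; transitivity (T (fun x => 0 * (fun _ => 0 : C) x)).
  by congr T; apply: funext => x; rewrite mul0r.
by rewrite hs mul0r.
Qed.

Lemma lin_sum T (I : Type) (r : seq I) (Fu : I -> F) : linD T ->
  T (fun x => \sum_(i <- r) Fu i x) = \sum_(i <- r) T (Fu i).
Proof.
move=> hT; elim: r => [|i r IH].
  rewrite big_nil; transitivity (T (fun _ => 0)); last exact: lin0.
  by congr T; apply: funext => x; rewrite big_nil.
rewrite big_cons -IH -(proj1 hT); congr T; apply: funext => x; by rewrite big_cons.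
Qed.

Lemma lin_decomp T : linD T -> forall u, T u = \sum_g u g * T (del g).
Proof.
move=> hT u.
transitivity (T (fun x => \sum_g (fun y => u g * del g y) x)).
  congr T; apply: funext => x; rewrite (bigD1 x) //= /del eqxx mulr1 big1 ?addr0 // => y hy.
  by rewrite eq_sym (negbTE hy) mulr0.
rewrite (lin_sum _ _ _ _ hT); apply: eq_bigr => g _; exact: (proj2 hT).
Qed.

Lemma lin_dual (T : D) : linD T -> isDual Phi T.
Proof.
move=> hT; split.
- by move=> u v _ _; exact: (proj1 hT).
- by move=> c u _; exact: (proj2 hT).
- exists (Mc * \sum_g cabs (T (del g))) => u _.
  rewrite (lin_decomp _ hT u); apply: (le_trans (cabs_sum _ _ _ _ _)).
  rewrite mulr_sumr mulr_suml; apply: ler_sum => g _.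
  rewrite cabsM mulrAC ler_wpM2r ?cabs_ge0 //.
- by move=> u /(_ (H1 u)).
Qed.

Lemma dual_lin (T : D) : isDual Phi T -> linD T.
Proof.
move=> [ha hs _ _]; split => *; [apply: ha | apply: hs]; exact: H1.
Qed.

Lemma ev_dual g : isDual Phi (ev g).
Proof. by apply: lin_dual; split. Qed.

Lemma dual_le_nd (T : D) (w : F) : isDual Phi T -> cabs (T w) <= normDual Phi T / tw w.
Proof.
move=> hT; have hl := dual_lin _ hT.
rewrite ler_pdivlMr // mulrC.
have <- : cabs (T (fun x => (tw w)%:C%C * w x)) = tw w * cabs (T w).
  by rewrite (proj2 hl) cabsM cabs_real // ltW.
have [_ _ [M hM] _] := hT.
apply: ub_le_sup; last first.
  by exists (fun x => (tw w)%:C%C * w x) => //; split.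
exists `|M| => _ [u [_ hu] <-].
apply: (le_trans (hM u (H1 u))).
apply: (le_trans (ler_wpM2r (H3 u) (real_ler_norm (num_real M)))).
by rewrite -[leRHS]mulr1 ler_wpM2l.
Qed.

Lemma dual_add (T T' : D) : isDual Phi T -> isDual Phi T' -> isDual Phi (fun u => T u + T' u).
Proof.
move=> /dual_lin [a1 s1] /dual_lin [a2 s2]; apply: lin_dual; split.
  by move=> u v; rewrite a1 a2 addrACA.
by move=> c u; rewrite s1 s2 mulrDr.
Qed.

Lemma dual_scale (c : C) (T : D) : isDual Phi T -> isDual Phi (fun u => c * T u).
Proof.
move=> /dual_lin [a1 s1]; apply: lin_dual; split.
  by move=> u v; rewrite a1 mulrDr.
by move=> d u; rewrite s1 mulrCA.
Qed.

Lemma dual_zero : isDual Phi (fun _ : F => 0 : C).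
Proof. by apply: lin_dual; split => *; rewrite ?addr0 ?mulr0. Qed.

Definition linB (X : BD) :=
  [/\ forall T T' : D, isDual Phi T -> isDual Phi T' ->
        X (fun u => T u + T' u) = X T + X T',
      forall (c : C) (T : D), isDual Phi T -> X (fun u => c * T u) = c * X T &
      forall T : D, ~ isDual Phi T -> X T = 0].

Lemma linB_sum (X : BD) (I : Type) (r : seq I) (Ts : I -> D) : linB X ->
  (forall i, isDual Phi (Ts i)) ->
  isDual Phi (fun u => \sum_(i <- r) Ts i u) /\
  X (fun u => \sum_(i <- r) Ts i u) = \sum_(i <- r) X (Ts i).
Proof.
move=> [ha hs _] hT; elim: r => [|i r [IHd IH]].
  have -> : (fun u => \sum_(i <- [::]) Ts i u) = (fun _ => 0).
    by apply: funext => u; rewrite big_nil.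
  split; first exact: dual_zero.
  rewrite big_nil; transitivity (X (fun u => 0 * (fun _ : F => 0 : C) u)).
    by congr X; apply: funext => u; rewrite mul0r.
  by rewrite hs ?mul0r //; exact: dual_zero.
have -> : (fun u => \sum_(j <- i :: r) Ts j u) =
   (fun u => Ts i u + (fun u => \sum_(j <- r) Ts j u) u).
  by apply: funext => u; rewrite big_cons.
split; first exact: dual_add.
by rewrite ha // IH big_cons.
Qed.

Lemma linB_decomp (X : BD) (T : D) : linB X -> isDual Phi T ->
  X T = \sum_g T (del g) * X (ev g).
Proof.
move=> hX hT.
transitivity (X (fun u => \sum_g (fun u => T (del g) * ev g u) u)).
  congr X; apply: funext => u; rewrite (lin_decomp _ (dual_lin _ hT) u).
  by apply: eq_bigr => g _; rewrite mulrC.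
have [_ ->] := linB_sum X _ (index_enum gT) _ hX (fun g => dual_scale (T (del g)) _ (ev_dual g)).
apply: eq_bigr => g _; have [_ hs _] := hX; exact: hs _ _ (ev_dual g).
Qed.

Lemma lin_bid (X : BD) : linB X -> isBidual Phi X.
Proof.
move=> hX; have [ha hs hz] := hX; split => //.
exists (\sum_g cabs (X (ev g)) / tw (del g)) => T hT.
rewrite (linB_decomp _ _ hX hT); apply: (le_trans (cabs_sum _ _ _ _ _)).
rewrite mulr_suml; apply: ler_sum => g _; rewrite cabsM mulrC.
rewrite -mulrA ler_wpM2l ?cabs_ge0 // mulrC.
exact: dual_le_nd.
Qed.

Lemma bid_lin (X : BD) : isBidual Phi X -> linB X.
Proof. by move=> [ha hs _ hz]; split. Qed.

Lemma dot_eq (u : F) (T : D) : dot Phi u T = fun v => T (fun x => u x * v x).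
Proof. by apply: funext => v; rewrite /dot asboolT //; exact: H1. Qed.

Lemma dot_dual (u : F) (T : D) : isDual Phi T -> isDual Phi (dot Phi u T).
Proof.
move=> hT; have hl := dual_lin _ hT; rewrite dot_eq; apply: lin_dual; split.
  move=> v w; rewrite -(proj1 hl); congr T; apply: funext => x; exact: mulrDr.
move=> c v; rewrite -(proj2 hl); congr T; apply: funext => x; exact: mulrCA.
Qed.

Lemma odot_eq (X : BD) (T : D) : odot Phi X T = fun u => X (dot Phi u T).
Proof. by apply: funext => u; rewrite /odot asboolT //; exact: H1. Qed.

Lemma odot_dual (X : BD) (T : D) : linB X -> isDual Phi T -> isDual Phi (odot Phi X T).
Proof.
move=> [ha hs _] hT; have hl := dual_lin _ hT; rewrite odot_eq; apply: lin_dual; split.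
  move=> u v; rewrite -ha; try exact: dot_dual.
  congr X; apply: funext => w.
  rewrite !dot_eq -(proj1 hl); congr T; apply: funext => x; exact: mulrDl.
move=> c u; rewrite -hs; last exact: dot_dual.
congr X; apply: funext => w.
rewrite !dot_eq -(proj2 hl); congr T; apply: funext => x; by rewrite mulrA.
Qed.

Lemma arens_dual (X Y : BD) (T : D) : isDual Phi T -> arens Phi X Y T = X (odot Phi Y T).
Proof. by move=> hT; rewrite /arens asboolT. Qed.

Lemma arens_lin (X Y : BD) : linB X -> linB Y -> linB (arens Phi X Y).
Proof.
move=> hX hY; have [haX hsX hzX] := hX; have [haY hsY hzY] := hY; split.
- move=> T T' hT hT'; rewrite !arens_dual //; last exact: dual_add.
  rewrite -haX; try exact: odot_dual.
  congr X; apply: funext => u; rewrite !odot_eq -haY; try exact: dot_dual.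
  by congr Y; apply: funext => v; rewrite !dot_eq.
- move=> c T hT; rewrite !arens_dual //; last exact: dual_scale.
  rewrite -hsX; last exact: odot_dual.
  congr X; apply: funext => u; rewrite !odot_eq -hsY; last exact: dot_dual.
  by congr Y; apply: funext => v; rewrite !dot_eq.
- by move=> T hT; rewrite /arens asboolF.
Qed.

Lemma arens_ev (X Y : BD) g : linB X -> linB Y -> arens Phi X Y (ev g) = Y (ev g) * X (ev g).
Proof.
move=> [haX hsX hzX] [haY hsY hzY]; rewrite arens_dual; last exact: ev_dual.
rewrite -hsX; last exact: ev_dual.
congr X; apply: funext => u; rewrite odot_eq mulrC -hsY; last exact: ev_dual.
by congr Y; apply: funext => v; rewrite dot_eq.
Qed.

Definition one : F := fun _ => 1.
Definition E : BD := fun T => if `[< isDual Phi T >] then T one else 0.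

Lemma E_lin : linB E.
Proof.
split.
- by move=> T T' hT hT'; rewrite /E !asboolT //; exact: dual_add.
- by move=> c T hT; rewrite /E !asboolT //; exact: dual_scale.
- by move=> T hT; rewrite /E asboolF.
Qed.

Lemma arens_E (X : BD) : linB X -> arens Phi X E = X.
Proof.
move=> [ha hs hz]; apply: funext => T; case: (asboolP (isDual Phi T)) => hT.
  rewrite arens_dual //; congr X; apply: funext => u.
  rewrite odot_eq /E asboolT; last exact: dot_dual.
  rewrite dot_eq; congr T; apply: funext => x.
  exact: mulr1.
by rewrite /arens asboolF // hz.
Qed.

Lemma E_ev g : E (ev g) = 1.
Proof. by rewrite /E asboolT //; exact: ev_dual. Qed.

Lemma bid_add (X Y : BD) : isBidual Phi X -> isBidual Phi Y -> isBidual Phi (biadd X Y).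
Proof.
move=> /bid_lin [ha1 hs1 hz1] /bid_lin [ha2 hs2 hz2]; apply: lin_bid; split.
- by move=> T T' hT hT'; rewrite /biadd ha1 // ha2 // addrACA.
- by move=> c T hT; rewrite /biadd hs1 // hs2 // mulrDr.
- by move=> T hT; rewrite /biadd hz1 // hz2 // addr0.
Qed.

Lemma bid_scale (c : C) (X : BD) : isBidual Phi X -> isBidual Phi (biscale c X).
Proof.
move=> /bid_lin [ha1 hs1 hz1]; apply: lin_bid; split.
- by move=> T T' hT hT'; rewrite /biscale ha1 // mulrDr.
- by move=> d T hT; rewrite /biscale hs1 // mulrCA.
- by move=> T hT; rewrite /biscale hz1 // mulr0.
Qed.

Lemma bid_zero : isBidual Phi (@bizero R gT).
Proof. by apply: lin_bid; split => *; rewrite /bizero ?addr0 ?mulr0. Qed.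

Lemma bid_arens (X Y : BD) : isBidual Phi X -> isBidual Phi Y -> isBidual Phi (arens Phi X Y).
Proof. by move=> /bid_lin hX /bid_lin hY; apply: lin_bid; exact: arens_lin. Qed.

Lemma E_bid : isBidual Phi E.
Proof. exact: lin_bid E_lin. Qed.


Definition Ig (g : gT) : BD -> Prop := fun X => isBidual Phi X /\ X (ev g) = 0.

Lemma Ig_max (g : gT) : maximal_modular_left_ideal (isBidual Phi) (@biadd R gT) (@biscale R gT)
  (arens Phi) (@bizero R gT) (Ig g).
Proof.
have hI : left_ideal (isBidual Phi) (@biadd R gT) (@biscale R gT) (arens Phi) (@bizero R gT) (Ig g).
  split.
  - by move=> x [].
  - by split; [exact: bid_zero | by []].
  - move=> x y [hx ex] [hy ey]; split; first exact: bid_add.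
    by rewrite /biadd ex ey addr0.
  - move=> c x [hx ex]; split; first exact: bid_scale.
    by rewrite /biscale ex mulr0.
  - move=> a x ha [hx ex]; split; first exact: bid_arens.
    by rewrite (arens_ev _ _ _ (bid_lin _ ha) (bid_lin _ hx)) ex mul0r.
split => //.
- exists E; split; first exact: E_bid.
  move=> a ha.
  have -> : biadd a (biscale (-1) (arens Phi a E)) = @bizero R gT.
    rewrite arens_E; last exact: bid_lin.
    by apply: funext => T; rewrite /biadd /biscale /bizero mulN1r subrr.
  by split; [exact: bid_zero | by []].
- exists E; split; first exact: E_bid.
  by move=> [_]; rewrite E_ev; apply/eqP; exact: oner_neq0.
- move=> J hJ [b [hb nb]] hIJ x hx.
  have hxB : isBidual Phi x by exact: (li_sub hJ hx).
  split => //.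
  have [//|hc] := eqVneq (x (ev g)) 0.
  exfalso; apply: nb.
  pose k := b (ev g) / x (ev g).
  have hy : Ig g (biadd b (biscale (- k) x)).
    split; first by apply: bid_add => //; exact: bid_scale.
    by rewrite /biadd /biscale /k mulNr divfK // subrr.
  have h1 := li_add hJ (hIJ _ hy) (li_scale hJ k hx).
  have <- : biadd (biadd b (biscale (- k) x)) (biscale k x) = b.
    by apply: funext => T; rewrite /biadd /biscale mulNr subrK.
  exact: h1.
Qed.

Lemma alg_semisimple : bidual_arens_semisimple gT Phi.
Proof.
move=> x [hx hrad]; apply: funext => T; rewrite /bizero.
case: (asboolP (isDual Phi T)) => hT; last by have [_ _ _ hz] := hx; exact: hz.
rewrite (linB_decomp _ _ (bid_lin _ hx) hT) big1 // => g _.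
by have [_ ->] := hrad _ (Ig_max g); rewrite mulr0.
Qed.
End Alg.


Theorem proposition3p5 (R : realType) (gT : finGroupType) (Phi Psi : R -> R) :
  young_function Phi -> young_function Psi -> complementary Phi Psi ->
  delta2 Phi -> delta2 Psi ->
  bidual_arens_semisimple gT Phi.
Proof.
move=> yP _ _ _ _.
have [a [a0 Pa]] := phi_small yP.
have [B [B0 PB]] := phi_big yP.
have H1 : forall u : gT -> R[i], inAP Phi u.
  by move=> u; exact: (inAP_all R gT Phi yP a B a0 Pa PB u).
have H2 : forall (u : gT -> R[i]) (x : gT), cabs (u x) <= Mc R gT a B * normAP Phi u.
  by move=> u x; exact: (normAP_lb R gT Phi yP a B a0 Pa B0 PB u x (H1 u)).
have H3 : forall u : gT -> R[i], 0 <= normAP Phi u.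
  by move=> u; exact: (normAP_ge0 R gT Phi yP a B a0 Pa PB u).
have H4 : forall w : gT -> R[i], 0 < tw R gT Phi a w.
  by move=> w; exact: (tw_gt0 R gT Phi yP a B a0 Pa PB w).
have H5 : forall w : gT -> R[i], normAP Phi (fun x => (tw R gT Phi a w)%:C%C * w x) <= 1.
  by move=> w; exact: (tw_norm R gT Phi yP a B a0 Pa PB w).
exact: (alg_semisimple R gT Phi H1 (Mc R gT a B) H2 H3 (tw R gT Phi a) H4 H5).
Qed.
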